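(* Let $R$ be a field having an element of infinite multiplicative order, and let $L\subseteq R[x]$ be the set of polynomials of degree $1$. Then every $\ell\in L$ is $2$-connected with $x$ through $L$, and consequently any two elements of $L$ are $4$-connected through $L$.
   Context: For a ring $S$ and $\ell,\ell'\in S$, $\ell\sim\ell'$ (1-connected) means: for all positive integers $m,n$ with $(\ell-\ell')\mid(\ell^m-(\ell')^n)$ we have $m=n$ (this relation is symmetric). $\ell$ and $\ell'$ are $k$-connected through a subset $T\subseteq S$ if there are $l_0,\dots,l_k\in S$ with $l_0=\ell$, $l_k=\ell'$, $l_1,\dots,l_{k-1}\in T$, and $l_{i-1}\sim l_i$ for $i=1,\dots,k$. *)

(* Defs.v *)
From mathcomp Require Import all_boot all_order all_algebra.
Set Implicit Arguments. Unset Strict Implicit. Unset Printing Implicit Defensive.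
Import GRing.Theory.
Local Open Scope ring_scope.

Definition rdvd (S : comNzRingType) (a b : S) : Prop := exists c : S, b = a * c.

Definition one_conn (S : comNzRingType) (l l' : S) : Prop :=
  forall m n : nat, (0 < m)%N -> (0 < n)%N ->
    rdvd (l - l') (l ^+ m - l' ^+ n) -> m = n.

Definition kconn (S : comNzRingType) (T : S -> Prop) (k : nat) (l l' : S) : Prop :=
  exists f : nat -> S,
    [/\ f 0%N = l, f k = l',
        (forall i : nat, (0 < i < k)%N -> T (f i)) &
        (forall i : nat, (0 < i <= k)%N -> one_conn (f i.-1) (f i))].

Definition deg1 (R : fieldType) (p : {poly R}) : Prop := size p = 2%N.

(* Main.v *)
Require Import Defs.
From mathcomp Require Import all_boot all_order all_algebra.
From mathcomp Require Import ring zify.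
Local Open Scope ring_scope.
Import GRing.Theory.

Definition info {R : fieldType} (t : R) :=
  forall m n : nat, (0 < m)%N -> (0 < n)%N -> t ^+ m = t ^+ n -> m = n.

Lemma powinj {R : fieldType} {a : R} : a != 0 ->
  (forall n : nat, (0 < n)%N -> a ^+ n != 1) ->
  forall i j : nat, a ^+ i = a ^+ j -> i = j.
Proof.
move=> a0 H.
have key : forall i j : nat, (i < j)%N -> a ^+ i <> a ^+ j.
  move=> i j lij E.
  have : a ^+ (j - i) == 1.
    have E2 : a ^+ i * a ^+ (j - i) = a ^+ i * 1.
      by rewrite -exprD subnKC ?(ltnW lij) // mulr1 E.
    by rewrite (mulfI _ E2) // expf_neq0.
  by rewrite (negbTE (H _ _)) // subn_gt0.
move=> i j E; case: (ltngtP i j) => // h; first by case: (key _ _ h E).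
by case: (key _ _ h (esym E)).
Qed.

Lemma infoX {R : fieldType} {a : R} : a != 0 ->
  (forall n : nat, (0 < n)%N -> a ^+ n != 1) -> forall k, (0 < k)%N -> info (a ^+ k).
Proof.
move=> a0 H k k0 m n _ _; rewrite -!exprM => /(powinj a0 H) E.
have : (k * m == k * n)%N by rewrite E.
by rewrite eqn_mul2l gtn_eqF //= => /eqP.
Qed.

Lemma L1 (R : fieldType) (p q : {poly R}) (r : R) :
  info p.[r] -> p.[r] = q.[r] -> one_conn p q.
Proof.
move=> I E m n m0 n0 [c Hc].
apply: I => //.
have := congr1 (horner^~ r) Hc.
rewrite /= hornerM hornerD hornerN !horner_exp hornerD hornerN E subrr mul0r.
by move/eqP; rewrite subr_eq0 -E => /eqP.
Qed.

Lemma horner2 (R : fieldType) (p : {poly R}) x : size p = 2%N ->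
  p.[x] = p`_0 + p`_1 * x.
Proof.
move=> s; rewrite horner_coef s !big_ord_recr big_ord0 /= add0r expr0 mulr1 expr1 //.
Qed.

Lemma mid (R : fieldType)
  (Hinf : exists a : R, a != 0 /\ forall n : nat, (0 < n)%N -> a ^+ n != 1)
  (l : {poly R}) : deg1 l -> exists m : {poly R}, [/\ deg1 m, one_conn l m,
    one_conn m l, one_conn m 'X & one_conn 'X m].
Proof.
case: Hinf => a [a0 H] dl.
have inf := infoX a0 H.
have inj := powinj a0 H.
have b0 : l`_1 != 0.
  have : lead_coef l != 0 by rewrite lead_coef_eq0 -size_poly_eq0 dl.
  by rewrite lead_coefE dl.
set v := a ^+ 2.
set s := (v - l`_0) / l`_1.
have ls : l.[s] = v by rewrite horner2 // /s mulrC divfK // addrC subrK.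
set u := if s == a then a ^+ 3 else a.
have infu : info u by rewrite /u; case: ifP => _; [apply: inf | rewrite -(expr1 a); apply: inf].
have su : s != u.
  rewrite /u; case: ifP => [/eqP -> | /negbT //].
  by apply/eqP; rewrite -{1}(expr1 a) => /inj.
have vu : v != u.
  rewrite /u /v; case: ifP => _; apply/eqP.
    by move/inj.
  by rewrite -{2}(expr1 a) => /inj.
set k := (v - u) / (s - u).
have k0 : k != 0 by rewrite mulf_neq0 ?invr_eq0 ?subr_eq0.
set m := k%:P * 'X + (u - k * u)%:P.
have mu : m.[u] = u.
  rewrite /m !hornerE /=. by rewrite [k * u + u]addrC addrK.
have ms : m.[s] = v.
  have h : k * (s - u) = v - u by rewrite /k divfK // subr_eq0.
  rewrite /m; clear mu; clear m; clearbody k u s v; rewrite !hornerE /=.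
  by rewrite -[v](subrK u) -h mulrBr addrAC.
have dm : deg1 m by rewrite /deg1 /m size_MXaddC polyC_eq0 (negbTE k0) /= size_polyC k0.
have infv : info v by apply: inf.
exists m; split => //.
- by apply: (@L1 _ _ _ s); rewrite ls // ms.
- by apply: (@L1 _ _ _ s); rewrite ms // ls.
- by apply: (@L1 _ _ _ u); rewrite mu // hornerX.
- by apply: (@L1 _ _ _ u); rewrite hornerX // mu.
Qed.

Theorem theorem2p9 (R : fieldType)
  (Hinf : exists a : R, a != 0 /\ forall n : nat, (0 < n)%N -> a ^+ n != 1) :
  (forall l : {poly R}, deg1 l -> kconn (@deg1 R) 2 l 'X) /\
  (forall l l' : {poly R}, deg1 l -> deg1 l' -> kconn (@deg1 R) 4 l l').
Proof.
have dX : deg1 ('X : {poly R}) by rewrite /deg1 size_polyX.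
split.
  move=> l dl; case: (@mid _ Hinf l dl) => m [dm h1 h2 h3 h4].
  exists (fun i => match i with 0 => l | 1 => m | _ => 'X end)%N; split => //.
    by case=> [|[|[]]].
  by case=> [|[|[|]]].
move=> l l' dl dl'.
case: (@mid _ Hinf l dl) => m [dm h1 h2 h3 h4].
case: (@mid _ Hinf l' dl') => m' [dm' g1 g2 g3 g4].
exists (fun i => match i with 0 => l | 1 => m | 2 => 'X | 3 => m' | _ => l' end)%N; split => //.
  by case=> [|[|[|[|[]]]]].
by case=> [|[|[|[|[|]]]]].
Qed.
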